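(* Let $\Delta\subset\Delta'$ be (not necessarily lattice) $d$-simplices in $\mathbb{R}^d$ having the origin $O$ as a common vertex and spanning the same cone at $O$. Then for every real $\epsilon$ with $0<\epsilon<1$ and every real $c\ge\sqrt d/\epsilon$ one has $$(c-\epsilon c)\Delta'\subset \mathrm{UC}_\Delta(c\Delta').$$
   Context: For affinely independent $v_0,\dots,v_e$, the affine lattice they define is $v_0+\sum_{i=1}^e\mathbb{Z}(v_i-v_0)$; for a simplex $\Delta=\mathrm{conv}(w_0,\dots,w_e)$ set $\mathcal{L}_\Delta=w_0+\sum_{i=1}^e\mathbb{Z}(w_i-w_0)$ (independent of the ordering of vertices). For an affine lattice $\mathcal L$, a simplex $\Sigma$ is $\mathcal L$-unimodular if $\mathcal L_\Sigma=\mathcal L$. For a polytope $P$, $\mathrm{UC}_{\mathcal L}(P)$ is the union of all $\mathcal L$-unimodular simplices contained in $P$, and $\mathrm{UC}_\Delta(P)=\mathrm{UC}_{\mathcal L_\Delta}(P)$. $cP$ denotes dilatation by $c$ with center $O$. *)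

(* Defs.v *)
From HB Require Import structures.
From mathcomp Require Import all_boot all_order all_algebra.
From mathcomp Require Import boolp classical_sets reals.
Set Implicit Arguments. Unset Strict Implicit. Unset Printing Implicit Defensive.
Import Order.TTheory GRing.Theory Num.Theory.
Local Open Scope ring_scope.
Local Open Scope classical_set_scope.

(* Points of R^d are row vectors 'rV[R]_d.  A simplex of dimension e is
   given by a family of e+1 vertices v : 'I_e.+1 -> 'rV[R]_d. *)

Definition aff_indep (R : realType) (d e : nat) (v : 'I_e.+1 -> 'rV[R]_d) : Prop :=
  forall lam : 'I_e.+1 -> R,
    \sum_i lam i = 0 -> \sum_i lam i *: v i = 0 -> forall i, lam i = 0.

Definition conv (R : realType) (d e : nat) (v : 'I_e.+1 -> 'rV[R]_d) : set 'rV[R]_d :=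
  [set x | exists lam : 'I_e.+1 -> R,
     (forall i, 0 <= lam i) /\ \sum_i lam i = 1 /\ x = \sum_i lam i *: v i].

Definition aff_lattice (R : realType) (d e : nat) (v : 'I_e.+1 -> 'rV[R]_d)
  : set 'rV[R]_d :=
  [set x | exists z : 'I_e.+1 -> int,
     x = v ord0 + \sum_i (z i)%:~R *: (v i - v ord0)].

Definition unimodular (R : realType) (d e : nat) (L : set 'rV[R]_d)
  (v : 'I_e.+1 -> 'rV[R]_d) : Prop :=
  aff_indep v /\ aff_lattice v = L.

Definition UC (R : realType) (d : nat) (L P : set 'rV[R]_d) : set 'rV[R]_d :=
  [set x | exists (e : nat) (v : 'I_e.+1 -> 'rV[R]_d),
     unimodular L v /\ conv v `<=` P /\ conv v x].

Definition dil (R : realType) (d : nat) (c : R) (P : set 'rV[R]_d) : set 'rV[R]_d :=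
  [set c *: x | x in P].

Definition cone0 (R : realType) (d : nat) (P : set 'rV[R]_d) : set 'rV[R]_d :=
  [set x | exists t : R, exists2 y, P y & 0 <= t /\ x = t *: y].

(* Main.v *)
Require Import Defs.
From HB Require Import structures.
From mathcomp Require Import all_boot all_order all_algebra.
From mathcomp Require Import boolp classical_sets reals.
From mathcomp Require Import ring lra zify.
Import Order.TTheory GRing.Theory Num.Theory.
Local Open Scope ring_scope.

Module Helpers.
Set Implicit Arguments. Unset Strict Implicit. Unset Printing Implicit Defensive.
Definition zs (R : realType) (mu : nat -> R) (j : nat) : R := \sum_(i < j.+1) mu i.
Definition fl (R : realType) (mu : nat -> R) j : int := Num.floor (zs mu j).
Definition fr (R : realType) (mu : nat -> R) j : R := zs mu j - (fl mu j)%:~R.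
Definition before (R : realType) (mu : nat -> R) (i j : nat) : bool :=
  (fr mu j < fr mu i) || ((fr mu i == fr mu j) && (j < i)%N).
Definition rk (R : realType) (n : nat) (mu : nat -> R) (j : nat) : nat :=
  #|[set i : 'I_n | before mu i j]|.

Lemma fr_ge0 (R : realType) (mu : nat -> R) j : 0 <= fr mu j.
Proof. by rewrite /fr subr_ge0 /fl floor_le. Qed.

Lemma fr_lt1 (R : realType) (mu : nat -> R) j : fr mu j < 1.
Proof. rewrite /fr /fl; have := floorD1_gt (zs mu j); rewrite intrD /=; lra. Qed.

Lemma before_irr (R : realType) (mu : nat -> R) j : ~~ before mu j j.
Proof. by rewrite /before ltxx ltnn andbF. Qed.

Lemma before_trans (R : realType) (mu : nat -> R) i j k :
  before mu i j -> before mu j k -> before mu i k.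
Proof.
rewrite /before => /orP[h1|/andP[/eqP e1 h1]] /orP[h2|/andP[/eqP e2 h2]].
- by rewrite (lt_trans h2 h1).
- by rewrite -e2 h1.
- by rewrite e1 h2.
- by rewrite e1 e2 eqxx (ltn_trans h2 h1) orbT.
Qed.

Lemma before_total (R : realType) (mu : nat -> R) i j :
  i != j -> before mu i j || before mu j i.
Proof.
move=> ij; rewrite /before.
have [h|h|h] := ltgtP (fr mu i) (fr mu j).
- by rewrite orbT.
- by [].
- case: (ltngtP i j) => e //=.
  by rewrite e eqxx in ij.
Qed.

Lemma before_le (R : realType) (mu : nat -> R) i j :
  before mu i j -> fr mu j <= fr mu i.
Proof. by rewrite /before => /orP[/ltW //|/andP[/eqP -> _]]. Qed.

Lemma rk_lt (R : realType) n (mu : nat -> R) j : (j < n)%N -> (rk n mu j < n)%N.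
Proof.
move=> jn; rewrite /rk.
apply: (@leq_trans #|[set: 'I_n]|); last by rewrite cardsT card_ord.
apply: proper_card; apply/properP; split; first exact: finset.subsetT.
exists (Ordinal jn); first by rewrite finset.in_setT.
by rewrite inE /= before_irr.
Qed.

Lemma rk_mono (R : realType) n (mu : nat -> R) i j : (i < n)%N ->
  before mu i j -> (rk n mu i < rk n mu j)%N.
Proof.
move=> io bij; rewrite /rk; apply: proper_card; apply/properP; split.
  by apply/fintype.subsetP => k; rewrite !inE => h; apply: before_trans h bij.
by exists (Ordinal io); rewrite !inE //= before_irr.
Qed.

Lemma rk_inj (R : realType) n (mu : nat -> R) i j : (i < n)%N -> (j < n)%N ->
  rk n mu i = rk n mu j -> i = j.
Proof.
move=> io jo e; apply/eqP; apply: contraT => ij.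
case/orP: (before_total mu ij) => h.
  by move: (rk_mono io h); rewrite e ltnn.
by move: (rk_mono jo h); rewrite e ltnn.
Qed.

Lemma rk_before (R : realType) n (mu : nat -> R) i j : (i < n)%N -> (j < n)%N ->
  (rk n mu i < rk n mu j)%N -> before mu i j.
Proof.
move=> io jo h.
have ij : i != j by apply: contraTneq h => ->; rewrite ltnn.
case/orP: (before_total mu ij) => // h2.
by move: (rk_mono jo h2); rewrite ltnNge (ltnW h).
Qed.

Definition sg (R : realType) n (mu : nat -> R) (m : nat) : nat :=
  match [pick j : 'I_n | rk n mu j == m] with Some j => val j | None => 0%N end.

Lemma sg_spec (R : realType) n (mu : nat -> R) m : (m < n)%N ->
  (sg n mu m < n)%N /\ rk n mu (sg n mu m) = m.
Proof.
move=> mn.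
pose f (j : 'I_n) : 'I_n := Ordinal (rk_lt mu (ltn_ord j)).
have finj : injective f.
  move=> a b /(congr1 val) /= e; apply: val_inj; exact: rk_inj e.
have [g fg gf] := injF_bij finj.
rewrite /sg; case: pickP => [j /eqP <-|].
  by split; [exact: ltn_ord|].
move=> /(_ (g (Ordinal mn))).
have := gf (Ordinal mn) => /(congr1 val) /= ->.
by rewrite eqxx.
Qed.

Lemma sg_rk (R : realType) n (mu : nat -> R) j : (j < n)%N -> sg n mu (rk n mu j) = j.
Proof.
move=> jn; have [h1 h2] := sg_spec mu (rk_lt mu jn).
exact: rk_inj h2.
Qed.

Definition Vk (R : realType) n (mu : nat -> R) (k j : nat) : int :=
  fl mu j + ((rk n mu j < k)%N : nat)%:Z.
Definition VV (R : realType) n (mu : nat -> R) (k j : nat) : int :=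
  if j is j'.+1 then Vk n mu k j' else 0.
Definition Nk (R : realType) n (mu : nat -> R) (k j : nat) : int :=
  VV n mu k j.+1 - VV n mu k j.

Lemma natz_r (R : pzRingType) (b : nat) : ((b%:Z)%:~R : R) = b%:R.
Proof. by []. Qed.

Lemma zsS (R : realType) (mu : nat -> R) j : zs mu j.+1 = zs mu j + mu j.+1.
Proof. by rewrite /zs big_ord_recr. Qed.

Lemma zs0 (R : realType) (mu : nat -> R) : zs mu 0 = mu 0%N.
Proof. by rewrite /zs big_ord1. Qed.

Lemma Nk_ge0 (R : realType) n (mu : nat -> R) k j :
  (forall j, (j < n)%N -> 0 <= mu j) -> (j < n)%N -> 0 <= Nk n mu k j.
Proof.
move=> hmu jn; rewrite /Nk /=.
case: j jn => [|j] jn /=.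
  rewrite subr0 /Vk; apply: addr_ge0 => //.
  by rewrite /fl floor_ge0 zs0 hmu.
rewrite /Vk.
have zle : zs mu j <= zs mu j.+1 by rewrite zsS lerDl hmu.
have fle : fl mu j <= fl mu j.+1 by apply: le_floor.
have [flt|feq] := boolP (fl mu j < fl mu j.+1).
  case: (rk n mu j < k)%N; case: (rk n mu j.+1 < k)%N => /=; lia.
have e : fl mu j.+1 = fl mu j by apply/eqP; rewrite eq_le fle andbT leNgt.
rewrite e.
have frle : fr mu j <= fr mu j.+1 by rewrite /fr e; lra.
have bf : before mu j.+1 j.
  rewrite /before; move: frle; rewrite le_eqVlt => /orP[/eqP ->|-> //].
  by rewrite eqxx ltnSn orbT.
have := rk_mono jn bf => hr.
case h1: (rk n mu j < k)%N; case h2: (rk n mu j.+1 < k)%N => //=; try lia.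
Qed.

Definition zz (R : realType) (mu : nat -> R) (j : nat) : R := \sum_(i < j) mu i.
Definition Dd (R : realType) n (mu : nat -> R) k j : R := (VV n mu k j)%:~R - zz mu j.

Lemma Nk_D (R : realType) n (mu : nat -> R) k j :
  (Nk n mu k j)%:~R - mu j = Dd n mu k j.+1 - Dd n mu k j.
Proof. rewrite /Dd /Nk intrB /zz big_ord_recr /=; ring. Qed.

Lemma Dd_le1 (R : realType) n (mu : nat -> R) k j : Dd n mu k j.+1 <= 1.
Proof.
rewrite /Dd /= /Vk intrD /zz.
have := floor_le (zs mu j); rewrite -/(fl mu j) /zs => h.
have : ((((rk n mu j < k)%N : nat)%:Z)%:~R : R) <= 1.
  by case: (rk n mu j < k)%N.
lra.
Qed.

Lemma Nk_bound (R : realType) n (mu a : nat -> R) k :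
  (forall j, (j < n)%N -> 0 <= a j <= 1) ->
  (forall j, (j.+1 < n)%N -> a j.+1 <= a j) ->
  \sum_(j < n) a j * (Nk n mu k j)%:~R <= \sum_(j < n) a j * mu j + 1.
Proof.
move=> ha hdec.
pose E m := \sum_(j < m) a j * (Dd n mu k j.+1 - Dd n mu k j).
have eq1 : \sum_(j < n) a j * (Nk n mu k j)%:~R = \sum_(j < n) a j * mu j + E n.
  rewrite /E -big_split /=; apply: eq_bigr => j _; rewrite -Nk_D; ring.
have D0 : Dd n mu k 0 = 0 by rewrite /Dd /zz big_ord0 /=; lra.
have claim : forall m, (m < n)%N -> E m.+1 <= a 0%N - a m + a m * Dd n mu k m.+1.
  elim=> [|m IH] mn.
    by rewrite /E big_ord1 D0 subr0; lra.
  have IH' := IH (ltnW mn).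
  rewrite /E big_ord_recr /= -/(E m.+1).
  have h1 := hdec m mn.
  have h2 := Dd_le1 n mu k m.
  have h3 := ha m.+1 mn.
  nra.
rewrite eq1.
have [n0|npos] := eqVneq n 0%N.
  have -> : E n = 0 by rewrite /E; apply: big1 => [[j jn]]; move: jn; rewrite n0.
  lra.
have nn : (n.-1 < n)%N by rewrite prednK ?lt0n // leqnn.
have := claim n.-1 nn; rewrite prednK ?lt0n //.
have := Dd_le1 n mu k n.-1; rewrite prednK ?lt0n //.
have := ha n.-1 nn.
have := ha 0%N (leq_ltn_trans (leq0n _) nn).
nra.
Qed.

Lemma tele (T : zmodType) (f : nat -> T) m :
  \sum_(k < m) (f k - f k.+1) = f 0%N - f m.
Proof.
elim: m => [|m IH]; first by rewrite big_ord0 subrr.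
by rewrite big_ord_recr /= IH addrA subrK.
Qed.

Lemma tele_ind (T : pzRingType) (f : nat -> T) p m : (p <= m)%N ->
  \sum_(k < m.+1) (f k - f k.+1) * ((p < k)%N)%:R = f p.+1 - f m.+1.
Proof.
elim: m => [|m IH].
  by rewrite leqn0 => /eqP ->; rewrite big_ord1 /= mulr0 subrr.
rewrite leq_eqVlt => /orP[/eqP ->|pm].
  rewrite subrr; apply: big1 => k _.
  by rewrite ltnNge -ltnS ltn_ord mulr0.
rewrite big_ord_recr /= IH // pm mulr1.
by rewrite addrA subrK.
Qed.

Definition Sf (R : realType) n (mu : nat -> R) (m : nat) : R :=
  if m is m'.+1 then (if (m' < n)%N then fr mu (sg n mu m') else 0) else 1.
Definition lam (R : realType) n (mu : nat -> R) (k : nat) : R :=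
  Sf n mu k - Sf n mu k.+1.

Lemma lam_ge0 (R : realType) n (mu : nat -> R) k : (k <= n)%N -> 0 <= lam n mu k.
Proof.
rewrite /lam /Sf subr_ge0; case: k => [|k] kn.
  case: (0 < n)%N; last by [].
  exact: ltW (fr_lt1 _ _).
rewrite kn; case: ifP => h; last exact: fr_ge0.
have [s1 r1] := sg_spec mu kn.
have [s2 r2] := sg_spec mu h.
apply: before_le; apply: (rk_before s1 s2).
by rewrite r1 r2.
Qed.

Lemma lam_sum (R : realType) n (mu : nat -> R) : \sum_(k < n.+1) lam n mu k = 1.
Proof. by rewrite /lam (tele (Sf n mu)) /= ltnn subr0. Qed.

Lemma lam_Vk (R : realType) n (mu : nat -> R) j : (j < n)%N ->
  \sum_(k < n.+1) lam n mu k * (Vk n mu k j)%:~R = zs mu j.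
Proof.
move=> jn.
transitivity ((fl mu j)%:~R * \sum_(k < n.+1) lam n mu k +
   \sum_(k < n.+1) (Sf n mu k - Sf n mu k.+1) * ((rk n mu j < k)%N)%:R).
  rewrite mulr_sumr -big_split; apply: eq_bigr => k _.
  rewrite /Vk intrD /lam natz_r -[X in _ = X]/(_ + _ : R); ring.
rewrite (lam_sum n mu) tele_ind; last exact: ltnW (rk_lt mu jn).
rewrite /= rk_lt // sg_rk // ltnn subr0 mulr1 /fr; ring.
Qed.

Lemma lam_Nk (R : realType) n (mu : nat -> R) j : (j < n)%N ->
  \sum_(k < n.+1) lam n mu k * (Nk n mu k j)%:~R = mu j.
Proof.
move=> jn.
have -> : \sum_(k < n.+1) lam n mu k * (Nk n mu k j)%:~R =
   \sum_(k < n.+1) lam n mu k * (VV n mu k j.+1)%:~R -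
   \sum_(k < n.+1) lam n mu k * (VV n mu k j)%:~R.
  rewrite -sumrB; apply: eq_bigr => k _; rewrite /Nk intrB; ring.
rewrite /= lam_Vk //.
case: j jn => [|j] jn /=.
  by rewrite big1 ?zs0 ?subr0 // => k _; rewrite mulr0.
by rewrite lam_Vk ?(ltnW jn) // zsS; ring.
Qed.

Lemma sum_ord_eq (T : pzRingType) n (b : 'I_n.+1 -> T) (k0 : 'I_n.+1) :
  \sum_(k < n.+1) b k * ((k : nat) == k0)%:R = b k0.
Proof.
rewrite (bigD1 k0) //= eqxx mulr1 big1 ?addr0 // => k kk0.
by rewrite (_ : (k : nat) == k0 = false) ?mulr0 //; apply/negbTE.
Qed.

Lemma indep_core (R : realType) n (mu : nat -> R) (b : 'I_n.+1 -> R) :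
  \sum_(k < n.+1) b k = 0 ->
  (forall j, (j < n)%N -> \sum_(k < n.+1) b k * (Nk n mu k j)%:~R = 0) ->
  forall k, b k = 0.
Proof.
move=> hs hN.
have hVV : forall j, (j <= n)%N -> \sum_(k < n.+1) b k * (VV n mu k j)%:~R = 0.
  elim=> [|j IH] jn.
    by apply: big1 => k _; rewrite /= mulr0.
  have := hN j jn; rewrite /Nk.
  have -> : \sum_(k < n.+1) b k * (VV n mu k j.+1 - VV n mu k j)%:~R =
    \sum_(k < n.+1) b k * (VV n mu k j.+1)%:~R -
    \sum_(k < n.+1) b k * (VV n mu k j)%:~R.
    by rewrite -sumrB; apply: eq_bigr => k _; rewrite intrB mulrBr.
  by rewrite IH ?(ltnW jn) // subr0.
pose T m := \sum_(k < n.+1) b k * ((m < k)%N)%:R.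
have hT : forall j, (j < n)%N -> T (rk n mu j) = 0.
  move=> j jn; have := hVV j.+1 jn.
  have -> : \sum_(k < n.+1) b k * (VV n mu k j.+1)%:~R =
     (fl mu j)%:~R * \sum_(k < n.+1) b k + T (rk n mu j).
    rewrite mulr_sumr -big_split; apply: eq_bigr => k _.
    by rewrite /= /Vk intrD natz_r -[X in _ = X]/(_ + _ : R); ring.
  by rewrite hs mulr0 add0r.
have hT' : forall m, (m <= n)%N -> T m = 0.
  move=> m; rewrite leq_eqVlt => /orP[/eqP ->|mn].
    by apply: big1 => k _; rewrite ltnNge -ltnS ltn_ord mulr0.
  have [s1 r1] := sg_spec mu mn.
  by rewrite -r1 hT.
move=> k0.
case ek: (k0 : nat) => [|m].
  rewrite -(sum_ord_eq b k0) ek.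
  have <- : \sum_(k < n.+1) b k - T 0%N = \sum_(k < n.+1) b k * ((k : nat) == 0%N)%:R.
    rewrite -sumrB; apply: eq_bigr => k _; case: (k : nat) => [|kk] /=.
      by rewrite mulr0 subr0 mulr1.
    by rewrite mulr1 mulr0 subrr.
  by rewrite hs hT' // subr0.
have mn : (m < n)%N by rewrite -ltnS -ek ltn_ord.
rewrite -(sum_ord_eq b k0) ek.
have <- : T m - T m.+1 = \sum_(k < n.+1) b k * ((k : nat) == m.+1)%:R.
  rewrite -sumrB; apply: eq_bigr => k _.
  rewrite -mulrBr; congr (_ * _).
  case h1: (m < k)%N; case h2: (m.+1 < k)%N; case h3: ((k : nat) == m.+1);
    rewrite /= ?subrr ?subr0 //; exfalso; lia.
by rewrite hT' ?hT' ?subr0 // ltnW.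
Qed.

Lemma lattice_core (R : realType) n (mu : nat -> R) (M : nat -> int) :
  exists zc : 'I_n.+1 -> int, forall j, (j < n)%N ->
    M j = Nk n mu 0 j + \sum_(k < n.+1) zc k * (Nk n mu k j - Nk n mu 0 j).
Proof.
pose PP j := \sum_(i < j) M i.
pose Tt j := PP j.+1 - fl mu j.
pose U m := if (m < n)%N then Tt (sg n mu m) else 0.
pose FU (k : nat) := if k is m.+1 then U m else 0.
exists (fun k => FU k - FU k.+1) => j jn.
pose Wt j := \sum_(k < n.+1) (FU k - FU k.+1) * (VV n mu k j - VV n mu 0 j).
have W0 : Wt 0%N = 0 by apply: big1 => k _; rewrite /= subrr mulr0.
have WS : forall j, (j < n)%N -> Wt j.+1 = Tt j.
  move=> i io; rewrite /Wt /=.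
  have -> : \sum_(k < n.+1) (FU k - FU k.+1) * (Vk n mu k i - Vk n mu 0 i) =
    \sum_(k < n.+1) (FU k - FU k.+1) * ((rk n mu i < k)%N)%:R.
    apply: eq_bigr => k _; rewrite /Vk ltn0; congr (_ * _).
    case: (rk n mu i < k)%N => /=; lia.
  rewrite tele_ind; last exact: ltnW (rk_lt mu io).
  by rewrite /FU /U rk_lt // ltnn sg_rk // subr0.
have -> : \sum_(k < n.+1) (FU k - FU k.+1) * (Nk n mu k j - Nk n mu 0 j) =
    Wt j.+1 - Wt j.
  rewrite /Wt -sumrB; apply: eq_bigr => k _; rewrite /Nk; ring.
rewrite WS // /Tt /PP big_ord_recr /= /Nk /= /Vk /= addr0.
case: j jn => [|j] jn.
  by rewrite W0 big_ord0 /=; ring.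
rewrite WS ?(ltnW jn) // /Tt /PP /= /Vk ltn0 addr0; ring.
Qed.

Definition srt (R : realType) d (i0 : 'I_d.+1) (a : 'I_d.+1 -> R) : seq 'I_d.+1 :=
  sort (fun i j : 'I_d.+1 => a j <= a i) (enum (predC1 i0)).

Lemma srt_size (R : realType) d i0 (a : 'I_d.+1 -> R) : size (srt i0 a) = d.
Proof. by rewrite /srt size_sort -cardE cardC1 card_ord. Qed.

Lemma srt_uniq (R : realType) d i0 (a : 'I_d.+1 -> R) : uniq (srt i0 a).
Proof. by rewrite /srt sort_uniq enum_uniq. Qed.

Lemma srt_mem (R : realType) d i0 (a : 'I_d.+1 -> R) i : (i \in srt i0 a) = (i != i0).
Proof. by rewrite /srt mem_sort mem_enum. Qed.

Lemma reidx (R : realType) (V : zmodType) d i0 (a : 'I_d.+1 -> R) (F : 'I_d.+1 -> V) :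
  \sum_(i | i != i0) F i = \sum_(j < d) F (nth i0 (srt i0 a) j).
Proof.
have -> : \sum_(i | i != i0) F i = \sum_(i <- enum (predC1 i0)) F i.
  by rewrite big_enum.
rewrite -(perm_big _ (_ : perm_eq (srt i0 a) (enum (predC1 i0)))); last first.
  by rewrite /srt perm_sort.
rewrite (big_nth i0) srt_size big_mkord //.
Qed.

Lemma reidx_all (R : realType) (V : zmodType) d i0 (a : 'I_d.+1 -> R) (F : 'I_d.+1 -> V) :
  F i0 = 0 -> \sum_i F i = \sum_(j < d) F (nth i0 (srt i0 a) j).
Proof. by move=> h; rewrite (bigD1 i0) //= h add0r (reidx i0 a). Qed.

Lemma h_ne (R : realType) d i0 (a : 'I_d.+1 -> R) j : (j < d)%N ->
  nth i0 (srt i0 a) j != i0.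
Proof. by move=> jd; rewrite -(srt_mem i0 a) mem_nth // srt_size. Qed.

Lemma idx_h (R : realType) d i0 (a : 'I_d.+1 -> R) j : (j < d)%N ->
  index (nth i0 (srt i0 a) j) (srt i0 a) = j.
Proof. by move=> jd; rewrite index_uniq ?srt_uniq ?srt_size. Qed.

Lemma sorted_a (R : realType) d i0 (a : 'I_d.+1 -> R) j : (j.+1 < d)%N ->
  a (nth i0 (srt i0 a) j.+1) <= a (nth i0 (srt i0 a) j).
Proof.
move=> jd.
have : sorted (fun i j : 'I_d.+1 => a j <= a i) (srt i0 a).
  by apply: sort_sorted => x y; exact: le_total.
by move/(sortedP i0) => /(_ j); rewrite srt_size => /(_ jd).
Qed.

Lemma vert_conv (R : realType) d e (w : 'I_e.+1 -> 'rV[R]_d) i : conv w (w i).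
Proof.
exists (fun k => (k == i)%:R); split; first by move=> k; rewrite ler0n.
split.
  by rewrite (bigD1 i) //= eqxx big1 ?addr0 // => k /negbTE ->.
by rewrite (bigD1 i) //= eqxx scale1r big1 ?addr0 // => k /negbTE ->; rewrite scale0r.
Qed.

Lemma uniq_gauge (R : realType) d (w' : 'I_d.+1 -> 'rV[R]_d) j0 :
  aff_indep w' -> w' j0 = 0 -> forall al be : 'I_d.+1 -> R,
  \sum_j al j *: w' j = \sum_j be j *: w' j ->
  \sum_(j | j != j0) al j = \sum_(j | j != j0) be j.
Proof.
move=> hw hj0 al be he.
pose S := \sum_(j | j != j0) (al j - be j).
pose lb j := if j == j0 then - S else al j - be j.
have h1 : \sum_j lb j = 0.
  rewrite (bigD1 j0) //= /lb eqxx.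
  rewrite (eq_bigr (fun j => al j - be j)); last by move=> j /negbTE ->.
  by rewrite -/S addNr.
have h2 : \sum_j lb j *: w' j = 0.
  have -> : \sum_j lb j *: w' j = \sum_j (al j - be j) *: w' j.
    apply: eq_bigr => j _; rewrite /lb; case: eqP => [->|//].
    by rewrite hj0 !scaler0.
  by rewrite (eq_bigr (fun j => al j *: w' j - be j *: w' j)) ?sumrB ?he ?subrr //
    => j _; rewrite scalerBl.
have := hw lb h1 h2 j0; rewrite /lb eqxx => /eqP; rewrite oppr_eq0 => /eqP.
by rewrite /S sumrB => /eqP; rewrite subr_eq0 => /eqP.
Qed.

Lemma expand (R : realType) d (w w' : 'I_d.+1 -> 'rV[R]_d)
  (LA : 'I_d.+1 -> 'I_d.+1 -> R) (hLA : forall i, w i = \sum_l LA i l *: w' l)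
  (J : finType) (g : J -> 'I_d.+1) (m : J -> R) :
  \sum_j m j *: w (g j) = \sum_l (\sum_j m j * LA (g j) l) *: w' l.
Proof.
under eq_bigr do rewrite hLA scaler_sumr.
rewrite exchange_big; apply: eq_bigr => l _; rewrite scaler_suml.
by apply: eq_bigr => j _; rewrite scalerA.
Qed.

Lemma gauge (R : realType) d (w w' : 'I_d.+1 -> 'rV[R]_d)
  (LA : 'I_d.+1 -> 'I_d.+1 -> R) (hLA : forall i, w i = \sum_l LA i l *: w' l)
  (hLA0 : forall i l, 0 <= LA i l) j0 (hj0 : w' j0 = 0) (c : R) (hc : 0 < c)
  (J : finType) (g : J -> 'I_d.+1) (m : J -> R) (hm : forall j, 0 <= m j) :
  \sum_j m j * (\sum_(l | l != j0) LA (g j) l) <= c ->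
  dil c (conv w') (\sum_j m j *: w (g j)).
Proof.
move=> hs; rewrite (expand hLA).
set ga := fun l => \sum_j m j * LA (g j) l.
have hga : forall l, 0 <= ga l.
  by move=> l; apply: sumr_ge0 => j _; apply: mulr_ge0.
have hsum : \sum_(l | l != j0) ga l <= c.
  apply: le_trans hs; rewrite le_eqVlt; apply/orP; left; apply/eqP.
  rewrite /ga exchange_big /=; apply: eq_bigr => j _; by rewrite mulr_sumr.
pose be l := if l == j0 then 1 - (\sum_(l | l != j0) ga l) / c else ga l / c.
exists (\sum_l be l *: w' l).
  exists be; split.
    move=> l; rewrite /be; case: eqP => _.
      by rewrite subr_ge0 ler_pdivrMr // mul1r.
    by apply: divr_ge0 => //; apply: ltW.
  split => //.
  rewrite (bigD1 j0) //= {1}/be eqxx.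
  rewrite [X in _ + X](eq_bigr (fun l => ga l / c)); last by move=> l /negbTE hl; rewrite /be /= hl.
  by rewrite -mulr_suml subrK.
rewrite scaler_sumr; apply: eq_bigr => l _; rewrite scalerA /be.
case: eqP => [->|_]; first by rewrite hj0 !scaler0.
by rewrite mulrC -mulrA mulVf ?mulr1 // gt_eqF.
Qed.

Lemma SW (R : realType) d m (be : 'I_m -> R) (N : 'I_m -> nat -> R)
  (W : nat -> 'rV[R]_d) n :
  \sum_k be k *: (\sum_(j < n) N k j *: W j) = \sum_(j < n) (\sum_k be k * N k j) *: W j.
Proof.
under eq_bigr do rewrite scaler_sumr.
rewrite exchange_big; apply: eq_bigr => j _; rewrite scaler_suml.
by apply: eq_bigr => k _; rewrite scalerA.
Qed.

Lemma indep_h (R : realType) d (w : 'I_d.+1 -> 'rV[R]_d) i0 (a : 'I_d.+1 -> R) :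
  aff_indep w -> w i0 = 0 -> forall cc : nat -> R,
  \sum_(j < d) cc j *: w (nth i0 (srt i0 a) j) = 0 -> forall j, (j < d)%N -> cc j = 0.
Proof.
move=> hw hi0 cc hs.
pose lb i := if i == i0 then - \sum_(j < d) cc j else cc (index i (srt i0 a)).
have e1 : \sum_(i | i != i0) lb i = \sum_(j < d) cc j.
  rewrite (reidx i0 a); apply: eq_bigr => j _.
  by rewrite /lb (negbTE (h_ne i0 a (ltn_ord j))) idx_h.
have h1 : \sum_i lb i = 0 by rewrite (bigD1 i0) //= e1 {1}/lb eqxx addNr.
have h2 : \sum_i lb i *: w i = 0.
  rewrite (bigD1 i0) //= hi0 scaler0 add0r (reidx i0 a) -[RHS]hs.
  apply: eq_bigr => j _.
  by rewrite /lb (negbTE (h_ne i0 a (ltn_ord j))) idx_h.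
move=> j jd; have := hw lb h1 h2 (nth i0 (srt i0 a) j).
by rewrite /lb (negbTE (h_ne i0 a jd)) idx_h.
Qed.

Definition LZ (R : realType) d (w : 'I_d.+1 -> 'rV[R]_d) i0 (a : 'I_d.+1 -> R) :
  set 'rV[R]_d :=
  [set y | exists M : nat -> int, y = \sum_(j < d) (M j)%:~R *: w (nth i0 (srt i0 a) j)].

Lemma latt_w (R : realType) d (w : 'I_d.+1 -> 'rV[R]_d) i0 (a : 'I_d.+1 -> R) :
  w i0 = 0 -> aff_lattice w = LZ w i0 a.
Proof.
move=> hi0; apply/seteqP; split => y.
  case=> z ->.
  pose t := 1 - \sum_k z k.
  pose nI i := z i + (if i == ord0 then t else 0).
  exists (fun j => nI (nth i0 (srt i0 a) j)).
  rewrite -(@reidx_all R _ d i0 a (fun i => (nI i)%:~R *: w i)); last by rewrite hi0 scaler0.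
  rewrite [RHS](eq_bigr (fun i => (z i)%:~R *: w i + (if i == ord0 then t else 0)%:~R *: w i));
    last by move=> i _; rewrite /= /nI intrD scalerDl.
  have E : \sum_i (if i == ord0 then t else 0)%:~R *: w i = t%:~R *: w ord0.
    rewrite (bigD1 ord0) //= big1 ?addr0 ?eqxx // => i hi; by rewrite (negbTE hi) scale0r.
  rewrite big_split /= E.
  rewrite (eq_bigr (fun i => (z i)%:~R *: w i - (z i)%:~R *: w ord0)); last first.
    by move=> i _; rewrite scalerBr.
  rewrite sumrB -scaler_suml -rmorph_sum /= /t intrB scalerBl scale1r.
  by rewrite addrA [w ord0 + _]addrC -addrA.
case=> M ->.
pose h := nth i0 (srt i0 a).
pose z i := if i == i0 then 1 - \sum_(j < d) M j else M (index i (srt i0 a)).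
have zs1 : \sum_i z i = 1.
  rewrite (bigD1 i0) //= {1}/z eqxx (reidx i0 a).
  rewrite [X in _ + X](eq_bigr (fun j : 'I_d => M j)); first by rewrite subrK.
  by move=> j _; rewrite /z (negbTE (h_ne i0 a (ltn_ord j))) idx_h.
exists z.
rewrite (eq_bigr (fun i => (z i)%:~R *: w i - (z i)%:~R *: w ord0)); last first.
  by move=> i _; rewrite scalerBr.
rewrite sumrB -scaler_suml -rmorph_sum /= zs1 scale1r addrC subrK.
rewrite (bigD1 i0) //= hi0 scaler0 add0r (reidx i0 a); apply: eq_bigr => j _.
by rewrite /z (negbTE (h_ne i0 a (ltn_ord j))) idx_h.
Qed.


Lemma latt_v (R : realType) d (w : 'I_d.+1 -> 'rV[R]_d) i0 (a : 'I_d.+1 -> R)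
  (N : nat -> nat -> int) :
  (forall M : nat -> int, exists zc : 'I_d.+1 -> int, forall j, (j < d)%N ->
     M j = N 0%N j + \sum_(k < d.+1) zc k * (N k j - N 0%N j)) ->
  aff_lattice (fun k : 'I_d.+1 => \sum_(j < d) (N k j)%:~R *: w (nth i0 (srt i0 a) j))
  = LZ w i0 a.
Proof.
move=> hN.
set W := fun j => w (nth i0 (srt i0 a) j).
have EX : forall z : 'I_d.+1 -> int,
  \sum_(j < d) (N 0%N j)%:~R *: W j +
  \sum_(k < d.+1) (z k)%:~R *: (\sum_(j < d) (N k j)%:~R *: W j -
                                 \sum_(j < d) (N 0%N j)%:~R *: W j) =
  \sum_(j < d) (N 0%N j + \sum_(k < d.+1) z k * (N k j - N 0%N j))%:~R *: W j.
  move=> z.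
  have -> : \sum_(k < d.+1) (z k)%:~R *: (\sum_(j < d) (N k j)%:~R *: W j -
                                 \sum_(j < d) (N 0%N j)%:~R *: W j) =
     \sum_(k < d.+1) (z k)%:~R *: \sum_(j < d) ((N k j - N 0%N j)%:~R : R) *: W j.
    apply: eq_bigr => k _; congr (_ *: _); rewrite -sumrB.
    by apply: eq_bigr => j _; rewrite intrB scalerBl.
  rewrite (SW (fun k : 'I_d.+1 => ((z k)%:~R : R))
              (fun (k : 'I_d.+1) j => ((N k j - N 0%N j)%:~R : R))).
  rewrite -big_split /=; apply: eq_bigr => j _.
  rewrite -scalerDl intrD rmorph_sum /=; congr (_ *: _); congr (_ + _).
  by apply: eq_bigr => k _; rewrite intrM.
apply/seteqP; split => y.
  case=> z ->; rewrite /= (EX z); by exists (fun j => N 0%N j + \sum_(k < d.+1) z k * (N k j - N 0%N j)).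
case=> M ->.
have [zc hzc] := hN M.
exists zc; rewrite EX; apply: eq_bigr => j _; by rewrite -hzc.
Qed.

Lemma main_pos (R : realType) (d : nat) (w w' : 'I_d.+1 -> 'rV[R]_d) :
  (0 < d)%N -> aff_indep w -> aff_indep w' ->
  (exists i, w i = 0) -> (exists j, w' j = 0) ->
  (conv w `<=` conv w')%classic ->
  cone0 (conv w) = cone0 (conv w') ->
  forall eps c : R, 0 < eps -> eps < 1 -> Num.sqrt (d%:R) / eps <= c ->
  (dil (c - eps * c) (conv w') `<=` UC (aff_lattice w) (dil c (conv w')))%classic.
Proof.
move=> d0 hw hw' [i0 hi0] [j0 hj0] hsub hcone eps c he0 he1 hc x [y hy <-].
have hsq : 1 <= Num.sqrt (d%:R : R).
  have h1 : (1 : R) <= d%:R by rewrite ler1n.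
  by rewrite -[X in X <= _]sqrtr1 ler_sqrt.
have hepsc : 1 <= eps * c.
  move: hc; rewrite ler_pdivrMr // => h; rewrite mulrC; exact: le_trans h.
have cpos : 0 < c by nra.
have [LA hLA] := choice (fun i => hsub _ (vert_conv w i)).
have hLA0 : forall i l, 0 <= LA i l by move=> i l; case: (hLA i) => h _; exact: h.
have hLAe : forall i, w i = \sum_l LA i l *: w' l by move=> i; case: (hLA i) => _ [].
have hLA1 : forall i, \sum_l LA i l = 1 by move=> i; case: (hLA i) => _ [].
pose a i := \sum_(l | l != j0) LA i l.
have ha : forall i, 0 <= a i <= 1.
  move=> i; apply/andP; split; first by apply: sumr_ge0 => l _.
  by rewrite -(hLA1 i) (bigD1 j0) //= lerDr.
have xcone : cone0 (conv w) ((c - eps * c) *: y).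
  rewrite hcone; exists (c - eps * c); exists y => //; split => //; nra.
case: xcone => t [p [kap [hk0 [hk1 hpe]]] [ht ex]].
pose mu i := t * kap i.
have hmu0 : forall i, 0 <= mu i by move=> i; apply: mulr_ge0.
have hx : (c - eps * c) *: y = \sum_i mu i *: w i.
  by rewrite ex hpe scaler_sumr; apply: eq_bigr => i _; rewrite scalerA.
case: hy => ly [hly0 [hly1 hye]].
have gx : \sum_i mu i * a i <= c - eps * c.
  have e1 := expand hLAe (fun i => i) mu.
  have := @uniq_gauge R d w' j0 hw' hj0 (fun l => \sum_i mu i * LA i l)
     (fun l => (c - eps * c) * ly l).
  rewrite -e1 -hx hye scaler_sumr.
  have -> : \sum_i (c - eps * c) *: (ly i *: w' i) = \sum_l ((c - eps * c) * ly l) *: w' l.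
    by apply: eq_bigr => l _; rewrite scalerA.
  move=> /(_ erefl) e2.
  have -> : \sum_i mu i * a i = \sum_(l | l != j0) \sum_i mu i * LA i l.
    rewrite exchange_big /=; apply: eq_bigr => i _; by rewrite mulr_sumr.
  rewrite e2 -mulr_sumr.
  have hl : \sum_(l | l != j0) ly l <= 1.
    apply: (@le_trans _ _ (\sum_l ly l)); last by rewrite hly1.
    by rewrite [X in _ <= X](bigD1 j0) //= lerDr.
  have : 0 <= c - eps * c by nra.
  have : 0 <= \sum_(l | l != j0) ly l by apply: sumr_ge0.
  nra.
pose h j := nth i0 (srt i0 a) j.
pose mus j := mu (h j).
pose aa j := a (h j).
have gs : \sum_(j < d) aa j * mus j <= c - eps * c.
  apply: le_trans gx.
  rewrite [X in _ <= X](bigD1 i0) //= (reidx i0 a).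
  apply: ler_wpDl; first by apply: mulr_ge0; [exact: hmu0 | case/andP: (ha i0)].
  by rewrite le_eqVlt; apply/orP; left; apply/eqP; apply: eq_bigr => j _; rewrite mulrC.
have hmus : forall j, (j < d)%N -> 0 <= mus j by move=> j _; exact: hmu0.
have haa : forall j, (j < d)%N -> 0 <= aa j <= 1 by move=> j _; exact: ha.
have hdec : forall j, (j.+1 < d)%N -> aa j.+1 <= aa j by move=> j jd; exact: sorted_a.
pose v (k : 'I_d.+1) := \sum_(j < d) (Nk d mus k j)%:~R *: w (h j).
exists d, v; split; [split|split].
- move=> be hb0 hbv.
  apply: (indep_core hb0) => j jd.
  apply: (@indep_h R d w i0 a hw hi0 (fun j => \sum_(k < d.+1) be k * (Nk d mus k j)%:~R)) => //.
  rewrite -(SW be (fun (k : 'I_d.+1) j => ((Nk d mus k j)%:~R : R)) (fun j => w (h j))).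
  exact: hbv.
- by rewrite (latt_w a hi0) /v latt_v // => M; exact: lattice_core.
- move=> q [be [hb0 [hb1 ->]]].
  rewrite /v (SW be (fun (k : 'I_d.+1) j => ((Nk d mus k j)%:~R : R)) (fun j => w (h j))).
  apply: (gauge hLAe hLA0 hj0 cpos (g := fun j : 'I_d => h j)).
    by move=> j; apply: sumr_ge0 => k _; apply: mulr_ge0 => //; rewrite ler0z Nk_ge0.
  have -> : \sum_(j < d) (\sum_(k < d.+1) be k * (Nk d mus k j)%:~R) * a (h j) =
     \sum_(k < d.+1) be k * \sum_(j < d) aa j * (Nk d mus k j)%:~R.
    under eq_bigr do rewrite mulr_suml.
    rewrite exchange_big; apply: eq_bigr => k _; rewrite mulr_sumr.
    by apply: eq_bigr => j _; rewrite /aa /=; ring.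
  apply: (@le_trans _ _ (\sum_(k < d.+1) be k * (\sum_(j < d) aa j * mus j + 1))).
    apply: ler_sum => k _; apply: ler_wpM2l => //.
    exact: Nk_bound.
  by rewrite -mulr_suml hb1 mul1r; lra.
exists (fun k => lam d mus k); split.
  by move=> k; apply: lam_ge0; rewrite -ltnS.
split; first exact: lam_sum.
rewrite hx /v (SW (fun k => lam d mus k) (fun (k : 'I_d.+1) j => ((Nk d mus k j)%:~R : R)) (fun j => w (h j))).
rewrite (@reidx_all R _ d i0 a (fun i => mu i *: w i)); last by rewrite hi0 scaler0.
by apply: eq_bigr => j _; rewrite lam_Nk.
Qed.




Lemma main_zero (R : realType) (w w' : 'I_1 -> 'rV[R]_0) (c s : R) :
  (dil s (conv w') `<=` UC (aff_lattice w) (dil c (conv w')))%classic.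
Proof.
have T0 : forall u v : 'rV[R]_0, u = v by move=> u v; rewrite (thinmx0 u) (thinmx0 v).
move=> x _; exists 0%N, (fun _ => 0); split; [split|split].
- move=> l hs _ i; by rewrite ord1 -hs big_ord1.
- by apply/seteqP; split => y _; exists (fun _ => 0); apply: T0.
- by move=> q _; exists (w' ord0); [exact: vert_conv|apply: T0].
- exists (fun _ => 1); split; first by move=> k; exact: ler01.
  by split; [rewrite big_ord1|apply: T0].
Qed.


End Helpers.
Import Helpers.

Local Open Scope classical_set_scope.

Theorem lemma2p2 (R : realType) (d : nat) (w w' : 'I_d.+1 -> 'rV[R]_d) :
  aff_indep w -> aff_indep w' ->
  (exists i, w i = 0) -> (exists j, w' j = 0) ->
  conv w `<=` conv w' ->
  cone0 (conv w) = cone0 (conv w') ->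
  forall eps c : R, 0 < eps -> eps < 1 -> Num.sqrt (d%:R) / eps <= c ->
  dil (c - eps * c) (conv w') `<=` UC (aff_lattice w) (dil c (conv w')).
Proof.
case: (posnP d) => [d0|dpos].
  subst d => *; exact: main_zero.
exact: main_pos.
Qed.
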